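(* Let $d\ge3$ be an integer, $p_1,\dots,p_d\in(0,1)$, $q_j=1-p_j$, and $P=\prod_{j=1}^d p_jq_j^{-1}$. Then there exist sequences $\varepsilon_n\to0$ and $\delta_n\to0$ such that for all sufficiently large $n$, $$\sum_{k=0}^n\binom nk^dP^k\le\left(\frac{P^{1/d}+1}{\sqrt{2\pi P^{1/d}}}+\varepsilon_n\right)^{d-1}n^{-\frac{d-1}{2}}\left(1+P^{1/d}\right)^{dn},$$ $$\sum_{k=0}^n\binom nk^dP^k\ge\left(\frac{P^{1/d}+1}{\sqrt{2\pi P^{1/d}}}\exp\!\left(-\frac{(P^{1/d}+1)^2}{2P^{1/d}}\right)+\delta_n\right)^{d}n^{-\frac{d-1}{2}}\left(1+P^{1/d}\right)^{dn}.$$ *)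

(* Defs.v *)
From Stdlib Require Import Reals.
Open Scope R_scope.

Definition Pprod (d : nat) (p : nat -> R) : R :=
  prod_f_R0 (fun j => p j / (1 - p j)) (Nat.pred d).

Definition binom_pow_sum (d n : nat) (P : R) : R :=
  sum_f_R0 (fun k => (Binomial.C n k) ^ d * P ^ k) n.

Definition root_d (d : nat) (P : R) : R := Rpower P (1 / INR d).

(* Main.v *)
Require Import Defs.
From Coquelicot Require Import Coquelicot.
From Stdlib Require Import Reals Lra Lia Psatz Factorial ZArith.
Open Scope R_scope.

Lemma mono_aux (f df : R -> R) (y : R) : 0 <= y ->
  (forall x, 0 <= x <= y -> is_derive f x (df x)) ->
  (forall x, 0 <= x <= y -> 0 <= df x) -> f 0 <= f y.
Proof.
  intros Hy Hd Hpos.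
  destruct (MVT_gen f 0 y df) as [c [Hc Heq]].
  - intros x Hx. apply Hd. unfold Rmin, Rmax in Hx.
    destruct (Rle_dec 0 y); lra.
  - intros x Hx. apply continuity_pt_filterlim.
    apply (ex_derive_continuous f x). eexists. apply Hd.
    unfold Rmin, Rmax in Hx. destruct (Rle_dec 0 y); lra.
  - unfold Rmin, Rmax in Hc. destruct (Rle_dec 0 y); [|lra].
    assert (0 <= df c) by (apply Hpos; lra). nra.
Qed.

Lemma ln_up (y : R) : 0 <= y -> ln (1 + y) <= y - y^2/2 + y^3/3.
Proof.
  intros Hy.
  set (f := fun x => x - x^2/2 + x^3/3 - ln (1 + x)).
  assert (f 0 <= f y).
  { apply (mono_aux f (fun x => x^3 / (1 + x))); auto.
    - intros x Hx. unfold f. auto_derive. lra. field. lra.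
    - intros x Hx. apply Rmult_le_pos. apply pow_le; lra.
      apply Rlt_le, Rinv_0_lt_compat; lra. }
  unfold f in H. rewrite Rplus_0_r, ln_1 in H. lra.
Qed.

Lemma ln_low (y : R) : 0 <= y -> y - y^2/2 + y^3/3 - y^4/4 <= ln (1 + y).
Proof.
  intros Hy.
  set (f := fun x => ln (1 + x) - (x - x^2/2 + x^3/3 - x^4/4)).
  assert (f 0 <= f y).
  { apply (mono_aux f (fun x => x^4 / (1 + x))); auto.
    - intros x Hx. unfold f. auto_derive. lra. field. lra.
    - intros x Hx. apply Rmult_le_pos. apply pow_le; lra.
      apply Rlt_le, Rinv_0_lt_compat; lra. }
  unfold f in H. rewrite Rplus_0_r, ln_1 in H. lra.
Qed.

Definition gs (i : nat) : R := (INR i + /2) * ln (1 + / INR i) - 1.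

Lemma gs_bound (i : nat) : (1 <= i)%nat ->
  Rabs (gs i) <= /2 * (/ INR i - / INR (S i)).
Proof.
  intros Hi. unfold gs. rewrite S_INR.
  assert (Hi' : 1 <= INR i) by (apply (le_INR 1); auto).
  set (x := INR i) in *.
  assert (Hy : 0 <= / x) by (apply Rlt_le, Rinv_0_lt_compat; lra).
  pose proof (ln_up (/ x) Hy) as U. pose proof (ln_low (/ x) Hy) as L.
  set (l := ln (1 + / x)) in *.
  set (y := / x) in *.
  assert (Hxy : x * y = 1) by (unfold y; field; lra).
  assert (Hx0 : x = / y) by (unfold y; field; lra).
  assert (Hy1 : y <= 1) by (unfold y; rewrite <- Rinv_1; apply Rinv_le_contravar; lra).
  assert (E : y - / (x + 1) = y * y / (1 + y)) by (unfold y; field; split; lra).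
  rewrite E.
  assert (Hyp : 0 < y) by (unfold y; apply Rinv_0_lt_compat; lra).
  assert (Hx : x = / y) by (unfold y; field; lra).
  assert (E1 : (x + /2) * (y - y^2/2 + y^3/3 - y^4/4) - 1 = y^2/12 - y^3/12 - y^4/8)
    by (rewrite Hx; field; lra).
  assert (E2 : (x + /2) * (y - y^2/2 + y^3/3) - 1 = y^2/12 + y^3/6)
    by (rewrite Hx; field; lra).
  assert (E3 : /2 * (y * y / (1 + y)) = y^2 / (2 * (1 + y))) by (field; lra).
  rewrite E3.
  assert (B1 : y^2/12 + y^3/6 <= y^2 / (2 * (1 + y))).
  { apply (Rmult_le_reg_r (2 * (1 + y))); [lra|].
    unfold Rdiv. rewrite Rmult_assoc, Rinv_l; [|lra]. nra. }
  assert (B2 : - (y^2 / (2 * (1 + y))) <= y^2/12 - y^3/12 - y^4/8).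
  { apply (Rmult_le_reg_r (2 * (1 + y))); [lra|].
    rewrite Ropp_mult_distr_l_reverse.
    unfold Rdiv. rewrite Rmult_assoc, Rinv_l; [|lra].
    assert (0 <= y^2 * (1 - y)) by (apply Rmult_le_pos; nra).
    nra. }
  assert (Hxh : 0 < x + /2) by lra.
  apply Rabs_le. split.
  - apply Rmult_le_compat_l with (r := x + /2) in L; lra.
  - apply Rmult_le_compat_l with (r := x + /2) in U; lra.
Qed.

Definition st (n : nat) : R :=
  INR (fact n) / (sqrt (2 * PI * INR n) * (INR n / exp 1) ^ n).

Lemma exp_gs (i : nat) : (1 <= i)%nat ->
  exp (- gs i) = exp 1 / ((1 + / INR i) ^ i * sqrt (1 + / INR i)).
Proof.
  intros Hi. assert (Hi' : 1 <= INR i) by (apply (le_INR 1); auto).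
  assert (Hz : 0 < 1 + / INR i) by (assert (0 < / INR i) by (apply Rinv_0_lt_compat; lra); lra).
  unfold gs.
  replace (- ((INR i + / 2) * ln (1 + / INR i) - 1)) with
    (1 + (- (INR i * ln (1 + / INR i)) + - (/2 * ln (1 + / INR i)))) by ring.
  rewrite !exp_plus, !exp_Ropp.
  rewrite <- (Rpower_sqrt (1 + / INR i)) by lra.
  rewrite <- (Rpower_pow i (1 + / INR i)) by lra.
  unfold Rpower. field. split; apply Rgt_not_eq; apply exp_pos.
Qed.

Lemma st_step (i : nat) : (1 <= i)%nat -> st (S i) = st i * exp (- gs i).
Proof.
  intros Hi. assert (Hi' : 1 <= INR i) by (apply (le_INR 1); auto).
  assert (Hz : 0 < 1 + / INR i) by (assert (0 < / INR i) by (apply Rinv_0_lt_compat; lra); lra).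
  rewrite exp_gs by auto.
  set (z := 1 + / INR i) in *.
  assert (E1 : INR (S i) / exp 1 = (INR i / exp 1) * z).
  { unfold z. rewrite S_INR. field. split; [lra|]. apply Rgt_not_eq, exp_pos. }
  assert (E2 : sqrt (2 * PI * INR (S i)) = sqrt (2 * PI * INR i) * sqrt z).
  { rewrite <- sqrt_mult. f_equal. unfold z. rewrite S_INR. field. lra.
    pose proof PI_RGT_0. nra. lra. }
  unfold st. rewrite E1, E2. rewrite Rpow_mult_distr.
  rewrite fact_simpl, mult_INR. simpl pow.
  assert (0 < sqrt z) by (apply sqrt_lt_R0; lra).
  assert (0 < sqrt (2 * PI * INR i)) by (apply sqrt_lt_R0; pose proof PI_RGT_0; nra).
  assert (0 < exp 1) by apply exp_pos.
  assert (0 < (INR i / exp 1) ^ i) by (apply pow_lt; apply Rdiv_lt_0_compat; lra).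
  assert (0 < z ^ i) by (apply pow_lt; lra).
  rewrite S_INR. replace (INR i + 1) with (INR i * z) by (unfold z; field; lra).
  field. repeat split; lra.
Qed.

Lemma exp_le_m (x y : R) : x <= y -> exp x <= exp y.
Proof. intros H. destruct (Rle_lt_or_eq_dec _ _ H). apply Rlt_le, exp_increasing; auto. rewrite e; lra. Qed.

Lemma st_pos (n : nat) : (1 <= n)%nat -> 0 < st n.
Proof.
  intros Hn. assert (1 <= INR n) by (apply (le_INR 1); auto).
  unfold st. apply Rdiv_lt_0_compat. apply lt_0_INR. apply lt_O_fact.
  apply Rmult_lt_0_compat. apply sqrt_lt_R0. pose proof PI_RGT_0; nra.
  apply pow_lt. apply Rdiv_lt_0_compat; [lra | apply exp_pos].
Qed.

Lemma st_tele (m k : nat) : (1 <= m)%nat ->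
  st m * exp (- (/2 * (/ INR m - / INR (m + k)))) <= st (m + k) <=
  st m * exp (/2 * (/ INR m - / INR (m + k))).
Proof.
  intros Hm. induction k as [|k IH].
  - rewrite Nat.add_0_r. replace (/ INR m - / INR m) with 0 by ring.
    rewrite Rmult_0_r, Ropp_0, exp_0, Rmult_1_r. lra.
  - replace (m + S k)%nat with (S (m + k)) by lia.
    rewrite st_step by lia.
    pose proof (gs_bound (m + k) ltac:(lia)) as G.
    assert (G1 := Rle_abs (gs (m + k))). assert (G2 := Rle_abs (- gs (m + k))).
    rewrite Rabs_Ropp in G2.
    assert (G' : - (/ 2 * (/ INR (m + k) - / INR (S (m + k)))) <= gs (m + k) <= / 2 * (/ INR (m + k) - / INR (S (m + k)))) by lra.
    clear G1 G2 G. rename G' into G.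
    assert (Hst : 0 < st (m + k)) by (apply st_pos; lia).
    assert (E : / INR m - / INR (S (m + k)) =
      (/ INR m - / INR (m + k)) + (/ INR (m + k) - / INR (S (m + k)))) by ring.
    rewrite E. rewrite Rmult_plus_distr_l.
    rewrite Ropp_plus_distr, !exp_plus.
    split.
    + rewrite <- Rmult_assoc. apply Rmult_le_compat.
      * apply Rmult_le_pos; [apply Rlt_le, st_pos; auto | apply Rlt_le, exp_pos].
      * apply Rlt_le, exp_pos.
      * apply IH.
      * apply exp_le_m. lra.
    + rewrite <- Rmult_assoc. apply Rmult_le_compat.
      * lra.
      * apply Rlt_le, exp_pos.
      * apply IH.
      * apply exp_le_m. lra.
Qed.

Definition Iw (n : nat) : R := RInt (fun x => sin x ^ n) 0 (PI / 2).

Lemma ex_Iw (n : nat) : ex_RInt (fun x => sin x ^ n) 0 (PI / 2).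
Proof.
  apply (@ex_RInt_continuous R_CompleteNormedModule). intros z _. apply (@ex_derive_continuous R_AbsRing R_NormedModule). auto_derive. auto.
Qed.

Lemma Iw0 : Iw 0 = PI / 2.
Proof.
  unfold Iw. simpl. rewrite RInt_const. unfold scal; simpl. unfold mult; simpl. ring.
Qed.

Lemma Iw1 : Iw 1 = 1.
Proof.
  unfold Iw. apply is_RInt_unique.
  replace 1 with (minus (- cos (PI/2)) (- cos 0)).
  2:{ rewrite cos_PI2, cos_0. unfold minus, plus, opp; simpl. ring. }
  apply (is_RInt_derive (fun x => - cos x)).
  - intros x _. auto_derive. auto. ring.
  - intros x _. apply (@ex_derive_continuous R_AbsRing R_NormedModule). auto_derive. auto.
Qed.

Lemma Iw_rec (n : nat) : INR (S (S n)) * Iw (S (S n)) = INR (S n) * Iw n.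
Proof.
  set (df := fun x => INR (S (S n)) * sin x ^ (S (S n)) - INR (S n) * sin x ^ n).
  assert (H1 : is_RInt df 0 (PI/2) 0).
  { assert (E : minus ((fun x => - cos x * sin x ^ (S n)) (PI/2)) ((fun x => - cos x * sin x ^ (S n)) 0) = 0).
    { simpl. rewrite cos_PI2, sin_0. unfold minus, plus, opp; simpl. ring. }
    rewrite <- E at 2.
    apply (is_RInt_derive (fun x => - cos x * sin x ^ (S n))).
    - intros x _. unfold df. auto_derive. auto.
      change (match n with 0%nat => 1 | S _ => INR n + 1 end) with (INR (S n)).
      rewrite !S_INR. simpl pow.
      assert (Hc : 1 - sin x * sin x - cos x * cos x = 0) by (pose proof (sin2_cos2 x); unfold Rsqr in *; lra).
      match goal with |- ?L = ?R => assert (HH : L - R = (INR n + 1) * sin x ^ n * (1 - sin x * sin x - cos x * cos x)) by ring end.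
      rewrite Hc, Rmult_0_r in HH. lra.
    - intros x _. apply (@ex_derive_continuous R_AbsRing R_NormedModule). unfold df. auto_derive. auto. }
  assert (H2 : is_RInt df 0 (PI/2) (INR (S (S n)) * Iw (S (S n)) - INR (S n) * Iw n)).
  { pose proof (@RInt_correct R_CompleteNormedModule _ _ _ (ex_Iw (S (S n)))) as Ia.
    pose proof (@RInt_correct R_CompleteNormedModule _ _ _ (ex_Iw n)) as Ib.
    apply (@is_RInt_scal R_NormedModule _ _ _ (INR (S (S n)))) in Ia.
    apply (@is_RInt_scal R_NormedModule _ _ _ (INR (S n))) in Ib.
    pose proof (@is_RInt_minus R_NormedModule _ _ _ _ _ _ Ia Ib) as Ic.
    exact Ic. }
  pose proof (is_RInt_unique _ _ _ _ H1). pose proof (is_RInt_unique _ _ _ _ H2).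
  lra.
Qed.

Lemma Iw_dec (n : nat) : Iw (S n) <= Iw n.
Proof.
  unfold Iw. apply RInt_le. pose proof PI_RGT_0; lra. apply ex_Iw. apply ex_Iw.
  intros x Hx. assert (0 < sin x) by (apply sin_gt_0; pose proof PI2_Rlt_PI; lra).
  assert (sin x <= 1) by (pose proof (SIN_bound x); lra).
  simpl. assert (0 <= sin x ^ n) by (apply pow_le; lra). nra.
Qed.

Fixpoint wl (m : nat) : R :=
  match m with O => 1 | S m' => wl m' * (2 * INR m' + 1) / (2 * INR m' + 2) end.

Lemma wl_pos (m : nat) : 0 < wl m.
Proof.
  induction m; simpl. lra. pose proof (pos_INR m).
  apply Rdiv_lt_0_compat; [apply Rmult_lt_0_compat|]; lra.
Qed.

Lemma Iw_wl (m : nat) : Iw (2 * m) = PI / 2 * wl m /\ Iw (S (2 * m)) = / ((2 * INR m + 1) * wl m).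
Proof.
  induction m as [|m [IH1 IH2]].
  - simpl. rewrite Iw0, Iw1. split; field.
  - pose proof (wl_pos m). pose proof (pos_INR m).
    replace (2 * S m)%nat with (S (S (2 * m))) by lia.
    pose proof (Iw_rec (2 * m)) as R1. pose proof (Iw_rec (S (2 * m))) as R2.
    assert (Hm2 : INR (2 * m) = 2 * INR m) by (rewrite mult_INR; simpl; ring).
    rewrite !S_INR in R1. rewrite !S_INR in R2. rewrite Hm2 in R1, R2.
    simpl wl. rewrite S_INR.
    split.
    + apply (Rmult_eq_reg_l (2 * INR m + 1 + 1)); [|lra].
      rewrite R1, IH1. field. lra.
    + apply (Rmult_eq_reg_l (2 * INR m + 1 + 1 + 1)); [|lra].
      rewrite R2, IH2. field. lra.
Qed.

Lemma wallis (m : nat) : (1 <= m)%nat ->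
  2 * INR m / (2 * INR m + 1) <= PI * INR m * wl m ^ 2 <= 1.
Proof.
  intros Hm. pose proof PI_RGT_0. assert (1 <= INR m) by (apply (le_INR 1); auto).
  destruct (Iw_wl m) as [A1 A2]. pose proof (Iw_dec (2 * m)) as D1.
  rewrite A1, A2 in D1. pose proof (wl_pos m).
  split.
  - assert (2 <= PI * (2 * INR m + 1) * wl m ^ 2).
    { apply (Rmult_le_compat_r (2 * (2 * INR m + 1) * wl m)) in D1; [|nra].
      rewrite Rinv_mult in D1. field_simplify in D1; try lra. }
    apply (Rmult_le_reg_r (2 * INR m + 1)); [lra|].
    unfold Rdiv. rewrite Rmult_assoc, Rinv_l; lra || nra.
  - destruct m as [|m']; [lia|].
    destruct (Iw_wl m') as [B1 B2].
    pose proof (Iw_dec (S (2 * m'))) as D2.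
    replace (S (S (2 * m'))) with (2 * S m')%nat in D2 by lia.
    rewrite A1, B2 in D2. simpl wl in *. rewrite S_INR in *.
    pose proof (wl_pos m'). pose proof (pos_INR m').
    apply Rmult_le_compat_r with (r := (2 * INR m' + 1) * wl m') in D2; [|nra].
    rewrite Rinv_l in D2; [|nra].
    replace (PI * (INR m' + 1) * (wl m' * (2 * INR m' + 1) / (2 * INR m' + 2)) ^ 2)
      with (PI / 2 * (wl m' * (2 * INR m' + 1) / (2 * INR m' + 2)) * ((2 * INR m' + 1) * wl m')) by (field; lra).
    exact D2.
Qed.

Lemma wl_fact (m : nat) : wl m = INR (fact (2 * m)) / (INR (fact m) ^ 2 * 4 ^ m).
Proof.
  induction m as [|m IH].
  - simpl. field.
  - simpl wl. rewrite IH.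
    replace (2 * S m)%nat with (S (S (2 * m))) by lia.
    rewrite !fact_simpl, !mult_INR.
    assert (Hm2 : INR (2 * m) = 2 * INR m) by (rewrite mult_INR; simpl; ring).
    rewrite !S_INR, Hm2. simpl pow.
    assert (0 < INR (fact m)) by (apply lt_0_INR, lt_O_fact).
    assert (0 < INR (fact (2 * m))) by (apply lt_0_INR, lt_O_fact).
    pose proof (pos_INR m).
    assert (0 < 4 ^ m) by (apply pow_lt; lra).
    field. repeat split; lra.
Qed.

Lemma st_ratio (m : nat) : (1 <= m)%nat ->
  st (2 * m) / (st m) ^ 2 = wl m * sqrt (PI * INR m).
Proof.
  intros Hm. assert (1 <= INR m) by (apply (le_INR 1); auto). pose proof PI_RGT_0.
  rewrite wl_fact. unfold st.
  assert (Hm2 : INR (2 * m) = 2 * INR m) by (rewrite mult_INR; simpl; ring).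
  rewrite Hm2.
  assert (E1 : sqrt (2 * PI * (2 * INR m)) = 2 * sqrt (PI * INR m)).
  { replace (2 * PI * (2 * INR m)) with (2 * 2 * (PI * INR m)) by ring.
    rewrite sqrt_mult by nra. rewrite sqrt_square by lra. reflexivity. }
  assert (E2 : sqrt (2 * PI * INR m) ^ 2 = 2 * (sqrt (PI * INR m)) ^ 2).
  { rewrite !pow2_sqrt by nra. ring. }
  assert (E3 : (2 * INR m / exp 1) ^ (2 * m) = 4 ^ m * ((INR m / exp 1) ^ m) ^ 2).
  { replace (2 * INR m / exp 1) with (2 * (INR m / exp 1)) by (unfold Rdiv; ring).
    rewrite Rpow_mult_distr. rewrite (pow_mult 2 2 m).
    replace ((INR m / exp 1) ^ (2 * m)) with (((INR m / exp 1) ^ m) ^ 2)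
      by (rewrite <- pow_mult; f_equal; lia).
    f_equal. f_equal. ring. }
  rewrite E1, E3.
  unfold Rdiv. rewrite !Rpow_mult_distr. rewrite !pow_inv. rewrite Rpow_mult_distr, E2.
  assert (0 < sqrt (PI * INR m)) by (apply sqrt_lt_R0; nra).
  assert (0 < INR (fact m)) by (apply lt_0_INR, lt_O_fact).
  assert (0 < INR (fact (2 * m))) by (apply lt_0_INR, lt_O_fact).
  assert (0 < 4 ^ m) by (apply pow_lt; lra).
  assert (0 < (INR m * / exp 1) ^ m) by (apply pow_lt; apply Rmult_lt_0_compat; [lra | apply Rinv_0_lt_compat, exp_pos]).
  assert (0 < exp 1 ^ m) by (apply pow_lt, exp_pos).
  assert (0 < INR m ^ m) by (apply pow_lt; lra).
  field. repeat split; try lra.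
Qed.

Lemma stirling (m : nat) : (1 <= m)%nat ->
  exp (- / (4 * INR m)) <= st m <= exp (/ (4 * INR m)) * sqrt (1 + / (2 * INR m)).
Proof.
  intros Hm. assert (1 <= INR m) by (apply (le_INR 1); auto). pose proof PI_RGT_0.
  pose proof (st_tele m m Hm) as T.
  replace (m + m)%nat with (2 * m)%nat in T by lia.
  assert (Hd : / 2 * (/ INR m - / INR (2 * m)) = / (4 * INR m)).
  { rewrite mult_INR. simpl INR. field. lra. }
  rewrite Hd in T.
  pose proof (st_ratio m Hm) as Rr. pose proof (wallis m Hm) as W.
  pose proof (wl_pos m) as Wp.
  set (rho := wl m * sqrt (PI * INR m)) in *.
  assert (Hs : 0 < sqrt (PI * INR m)) by (apply sqrt_lt_R0; nra).
  assert (Hrho : 0 < rho) by (unfold rho; nra).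
  assert (Hrho2 : rho ^ 2 = PI * INR m * wl m ^ 2).
  { unfold rho. rewrite Rpow_mult_distr, pow2_sqrt by nra. ring. }
  assert (Hst : 0 < st m) by (apply st_pos; auto).
  assert (Hst2 : 0 < st (2 * m)) by (apply st_pos; lia).
  assert (Em : st (2 * m) = st m * st m * rho).
  { rewrite <- Rr. field. lra. }
  assert (Hr1 : rho <= 1) by nra.
  pose proof (exp_pos (/ (4 * INR m))). pose proof (exp_pos (- / (4 * INR m))).
  split.
  - apply (Rmult_le_reg_l (st m)); auto.
    assert (0 <= st m * st m) by nra.
    assert (st m * st m * rho <= st m * st m) by nra.
    lra.
  - assert (Hinv : / rho <= sqrt (1 + / (2 * INR m))).
    { rewrite <- (sqrt_square (/ rho)) by (apply Rlt_le, Rinv_0_lt_compat; auto).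
      apply sqrt_le_1_alt.
      replace (/ rho * / rho) with (/ rho ^ 2) by (field; lra).
      rewrite Hrho2.
      replace (1 + / (2 * INR m)) with (/ (2 * INR m / (2 * INR m + 1))) by (field; lra).
      apply Rinv_le_contravar. apply Rdiv_lt_0_compat; lra. lra. }
    assert (K : st m * rho <= exp (/ (4 * INR m))).
    { apply (Rmult_le_reg_l (st m)); auto. lra. }
    replace (st m) with ((st m * rho) * / rho) by (field; lra).
    apply Rmult_le_compat; auto.
    apply Rmult_le_pos; lra.
    apply Rlt_le, Rinv_0_lt_compat; auto.
Qed.

Lemma ln_le_sub1 (x : R) : 0 < x -> ln x <= x - 1.
Proof. intros H. pose proof (exp_ineq1_le (ln x)). rewrite exp_ln in H0; lra. Qed.

Lemma ln_ge_1inv (x : R) : 0 < x -> 1 - / x <= ln x.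
Proof.
  intros H. pose proof (ln_le_sub1 (/ x) (Rinv_0_lt_compat _ H)).
  rewrite ln_Rinv in H0; lra.
Qed.

Definition fterm (p : R) (k l : nat) : R :=
  (INR (k + l) * p / INR k) ^ k * (INR (k + l) * (1 - p) / INR l) ^ l.

Lemma fterm_ln (p : R) (k l : nat) : 0 < p < 1 -> (1 <= k)%nat -> (1 <= l)%nat ->
  0 < fterm p k l /\
  ln (fterm p k l) = INR k * ln (INR (k + l) * p / INR k) + INR l * ln (INR (k + l) * (1 - p) / INR l).
Proof.
  intros Hp Hk Hl. assert (1 <= INR k) by (apply (le_INR 1); auto).
  assert (1 <= INR l) by (apply (le_INR 1); auto). rewrite plus_INR.
  assert (0 < (INR k + INR l) * p / INR k) by (apply Rdiv_lt_0_compat; nra).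
  assert (0 < (INR k + INR l) * (1 - p) / INR l) by (apply Rdiv_lt_0_compat; nra).
  unfold fterm. rewrite plus_INR.
  split. apply Rmult_lt_0_compat; apply pow_lt; auto.
  rewrite ln_mult by (apply pow_lt; auto). rewrite !ln_pow by auto. reflexivity.
Qed.

Lemma fterm_le1 (p : R) (k l : nat) : 0 < p < 1 -> (1 <= k)%nat -> (1 <= l)%nat ->
  fterm p k l <= 1.
Proof.
  intros Hp Hk Hl. destruct (fterm_ln p k l Hp Hk Hl) as [Hpos Hln].
  assert (1 <= INR k) by (apply (le_INR 1); auto).
  assert (1 <= INR l) by (apply (le_INR 1); auto). rewrite plus_INR in Hln.
  assert (0 < (INR k + INR l) * p / INR k) by (apply Rdiv_lt_0_compat; nra).
  assert (0 < (INR k + INR l) * (1 - p) / INR l) by (apply Rdiv_lt_0_compat; nra).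
  pose proof (ln_le_sub1 _ H1). pose proof (ln_le_sub1 _ H2).
  assert (ln (fterm p k l) <= 0).
  { rewrite Hln.
    apply Rmult_le_compat_l with (r := INR k) in H3; [|lra].
    apply Rmult_le_compat_l with (r := INR l) in H4; [|lra].
    assert (E : INR k * ((INR k + INR l) * p / INR k - 1) + INR l * ((INR k + INR l) * (1 - p) / INR l - 1) = 0)
      by (field; lra).
    lra. }
  rewrite <- (exp_ln _ Hpos). rewrite <- exp_0. apply exp_le_m. auto.
Qed.

Lemma fterm_ge (p : R) (k l : nat) : 0 < p < 1 -> (1 <= k)%nat -> (1 <= l)%nat ->
  exp (- (INR k - INR (k + l) * p) ^ 2 / (INR (k + l) * p * (1 - p))) <= fterm p k l.
Proof.
  intros Hp Hk Hl. destruct (fterm_ln p k l Hp Hk Hl) as [Hpos Hln].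
  assert (1 <= INR k) by (apply (le_INR 1); auto).
  assert (1 <= INR l) by (apply (le_INR 1); auto). rewrite plus_INR in Hln |- *.
  assert (0 < (INR k + INR l) * p / INR k) by (apply Rdiv_lt_0_compat; nra).
  assert (0 < (INR k + INR l) * (1 - p) / INR l) by (apply Rdiv_lt_0_compat; nra).
  pose proof (ln_ge_1inv _ H1). pose proof (ln_ge_1inv _ H2).
  rewrite <- (exp_ln _ Hpos). apply exp_le_m. rewrite Hln.
  apply Rmult_le_compat_l with (r := INR k) in H3; [|lra].
  apply Rmult_le_compat_l with (r := INR l) in H4; [|lra].
  assert (E : INR k * (1 - / ((INR k + INR l) * p / INR k)) + INR l * (1 - / ((INR k + INR l) * (1 - p) / INR l))
     = - (INR k - (INR k + INR l) * p) ^ 2 / ((INR k + INR l) * p * (1 - p)))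
    by (field; repeat split; lra).
  lra.
Qed.

Definition ab (p : R) (n k : nat) : R := Binomial.C n k * p ^ k * (1 - p) ^ (n - k).

Lemma fact_st (j : nat) : (1 <= j)%nat ->
  INR (fact j) = st j * (sqrt (2 * PI * INR j) * (INR j / exp 1) ^ j).
Proof.
  intros Hj. assert (1 <= INR j) by (apply (le_INR 1); auto). pose proof PI_RGT_0.
  unfold st. field. split.
  apply Rgt_not_eq, pow_lt, Rdiv_lt_0_compat; [lra | apply exp_pos].
  apply Rgt_not_eq, sqrt_lt_R0. nra.
Qed.

Lemma ab_st (p : R) (k l : nat) : 0 < p < 1 -> (1 <= k)%nat -> (1 <= l)%nat ->
  ab p (k + l) k = st (k + l) / (st k * st l) *
     sqrt (INR (k + l) / (2 * PI * INR k * INR l)) * fterm p k l.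
Proof.
  intros Hp Hk Hl.
  assert (1 <= INR k) by (apply (le_INR 1); auto).
  assert (1 <= INR l) by (apply (le_INR 1); auto). pose proof PI_RGT_0.
  unfold ab, Binomial.C, fterm. replace (k + l - k)%nat with l by lia.
  rewrite (fact_st (k + l)), (fact_st k), (fact_st l) by lia.
  assert (Es : sqrt (2 * PI * INR (k + l)) =
     sqrt (INR (k + l) / (2 * PI * INR k * INR l)) * sqrt (2 * PI * INR k) * sqrt (2 * PI * INR l)).
  { rewrite plus_INR.
    assert (0 < 2 * PI * INR k * INR l) by (apply Rmult_lt_0_compat; [apply Rmult_lt_0_compat; [apply Rmult_lt_0_compat|]|]; lra).
    assert (0 < (INR k + INR l) / (2 * PI * INR k * INR l)) by (apply Rdiv_lt_0_compat; lra).
    rewrite <- !sqrt_mult; try nra.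
    f_equal. field. lra. }
  rewrite Es.
  set (n := INR (k + l)) in *.
  assert (Hn : 2 <= n) by (unfold n; rewrite plus_INR; lra).
  rewrite pow_add.
  assert (E1 : (n * p / INR k) ^ k = (n / exp 1) ^ k * p ^ k / (INR k / exp 1) ^ k).
  { unfold Rdiv. rewrite !Rpow_mult_distr, !pow_inv. field.
    split; apply Rgt_not_eq, pow_lt; [apply exp_pos | lra]. }
  assert (E2 : (n * (1 - p) / INR l) ^ l = (n / exp 1) ^ l * (1 - p) ^ l / (INR l / exp 1) ^ l).
  { unfold Rdiv. rewrite !Rpow_mult_distr, !pow_inv. field.
    split; apply Rgt_not_eq, pow_lt; [apply exp_pos | lra]. }
  rewrite E1, E2.
  assert (0 < st k) by (apply st_pos; auto). assert (0 < st l) by (apply st_pos; auto).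
  assert (0 < sqrt (2 * PI * INR k)) by (apply sqrt_lt_R0; nra).
  assert (0 < sqrt (2 * PI * INR l)) by (apply sqrt_lt_R0; nra).
  assert (0 < (INR k / exp 1) ^ k) by (apply pow_lt, Rdiv_lt_0_compat; [lra|apply exp_pos]).
  assert (0 < (INR l / exp 1) ^ l) by (apply pow_lt, Rdiv_lt_0_compat; [lra|apply exp_pos]).
  field. repeat split; lra.
Qed.

Lemma ab_nonneg (p : R) (n k : nat) : 0 < p < 1 -> 0 <= ab p n k.
Proof.
  intros Hp. unfold ab, Binomial.C.
  apply Rmult_le_pos; [apply Rmult_le_pos|].
  - apply Rmult_le_pos. apply pos_INR. apply Rlt_le, Rinv_0_lt_compat.
    rewrite <- mult_INR. apply lt_0_INR. apply Nat.mul_pos_pos; apply lt_O_fact.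
  - apply pow_le; lra.
  - apply pow_le; lra.
Qed.

Lemma ab_step (p : R) (n k : nat) : 0 < p < 1 -> (k < n)%nat ->
  ab p n (S k) = ab p n k * ((INR n - INR k) * p / ((INR k + 1) * (1 - p))).
Proof.
  intros Hp Hk. unfold ab. rewrite pascal_step3 by auto.
  rewrite minus_INR, S_INR by lia.
  replace (n - k)%nat with (S (n - S k)) by lia. simpl pow.
  pose proof (pos_INR k). field. lra.
Qed.

Definition mo (p : R) (n : nat) : nat := Z.to_nat (Int_part (INR (S n) * p)).

Lemma mo_spec (p : R) (n : nat) : 0 < p < 1 ->
  INR (mo p n) <= INR (S n) * p < INR (mo p n) + 1 /\ (mo p n <= n)%nat.
Proof.
  intros Hp. pose proof (base_Int_part (INR (S n) * p)) as [B1 B2].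
  assert (0 < INR (S n)) by (apply lt_0_INR; lia).
  assert (Hx : 0 <= INR (S n) * p) by nra.
  assert (Hz : (0 <= Int_part (INR (S n) * p))%Z).
  { assert (H0 : -1 < IZR (Int_part (INR (S n) * p))) by lra. change (-1) with (IZR (-1)) in H0. apply lt_IZR in H0. lia. }
  assert (E : INR (mo p n) = IZR (Int_part (INR (S n) * p))).
  { unfold mo. rewrite INR_IZR_INZ. rewrite Z2Nat.id by auto. reflexivity. }
  rewrite E. split. lra.
  apply Nat.lt_succ_r, INR_lt. rewrite E. apply Rle_lt_trans with (INR (S n) * p); auto.
  nra.
Qed.

Lemma ab_le_mode (p : R) (n k : nat) : 0 < p < 1 -> (k <= n)%nat ->
  ab p n k <= ab p n (mo p n).
Proof.
  intros Hp Hkn. destruct (mo_spec p n Hp) as [[M1 M2] Mn].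
  set (m := mo p n) in *. rewrite S_INR in M1, M2.
  destruct (le_lt_dec k m) as [Hkm|Hkm].
  - assert (forall j i, (i + j = m)%nat -> ab p n i <= ab p n m).
    { induction j as [|j IH]; intros i Hi.
      - replace i with m by lia. lra.
      - apply Rle_trans with (ab p n (S i)); [|apply IH; lia].
        rewrite (ab_step p n i Hp) by lia.
        assert (INR (S i) <= INR m) by (apply le_INR; lia). rewrite S_INR in H.
        assert (INR i <= INR n) by (apply le_INR; lia).
        pose proof (ab_nonneg p n i Hp).
        assert (1 <= (INR n - INR i) * p / ((INR i + 1) * (1 - p))).
        { pose proof (pos_INR i).
          apply (Rmult_le_reg_r ((INR i + 1) * (1 - p))). nra.
          unfold Rdiv. rewrite Rmult_assoc, Rinv_l by nra. nra. }
        nra. }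
    apply (H (m - k)%nat). lia.
  - assert (forall j, (m + j <= n)%nat -> ab p n (m + j) <= ab p n m).
    { induction j as [|j IH]; intros Hj.
      - rewrite Nat.add_0_r. lra.
      - apply Rle_trans with (ab p n (m + j)); [|apply IH; lia].
        replace (m + S j)%nat with (S (m + j)) by lia.
        rewrite (ab_step p n (m + j) Hp) by lia.
        assert (INR m <= INR (m + j)) by (apply le_INR; lia).
        assert (INR (m + j) <= INR n) by (apply le_INR; lia).
        pose proof (ab_nonneg p n (m + j) Hp).
        assert ((INR n - INR (m + j)) * p / ((INR (m + j) + 1) * (1 - p)) <= 1).
        { pose proof (pos_INR (m + j)).
          apply (Rmult_le_reg_r ((INR (m + j) + 1) * (1 - p))). nra.
          unfold Rdiv. rewrite Rmult_assoc, Rinv_l by nra. nra. }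
        assert (0 <= (INR n - INR (m + j)) * p / ((INR (m + j) + 1) * (1 - p))).
        { apply Rmult_le_pos. nra. apply Rlt_le, Rinv_0_lt_compat. pose proof (pos_INR (m + j)). nra. }
        nra. }
    replace k with (m + (k - m))%nat by lia. apply H. lia.
Qed.

Lemma ex_derive_cont (f : R -> R) (x : R) : ex_derive f x -> continuity_pt f x.
Proof.
  intros H. apply continuity_pt_filterlim.
  apply (@ex_derive_continuous R_AbsRing R_NormedModule). auto.
Qed.

Lemma cont_eps (f : R -> R) : continuity_pt f 0 ->
  forall eps, 0 < eps -> exists del, 0 < del /\ forall y, 0 <= y < del -> Rabs (f y - f 0) < eps.
Proof.
  intros Hc eps He. destruct (Hc eps He) as [del [Hd Hf]].
  exists del. split; auto. intros y Hy.
  destruct (Req_dec y 0) as [->|Hy0].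
  - rewrite Rminus_diag, Rabs_R0. auto.
  - apply (Hf y). split. split. exact I. auto.
    simpl. unfold R_dist. rewrite Rminus_0_r, Rabs_right; lra.
Qed.

Lemma small_n (eta : R) : 0 < eta -> exists N : nat, (1 <= N)%nat /\
  forall n, (N <= n)%nat -> / INR n < eta.
Proof.
  intros He. destruct (archimed_cor1 eta He) as [N [HN HN0]].
  exists N. split. lia. intros n Hn.
  apply Rle_lt_trans with (/ INR N); auto.
  apply Rinv_le_contravar. apply lt_0_INR; lia. apply le_INR; auto.
Qed.

Definition Hf (p : R) (u : R) : R :=
  exp (u / 4 + u / (4 * (p - u)) + u / (4 * (1 - p - u))) * sqrt (1 + u / 2) *
  sqrt (/ (2 * PI * (p - u) * (1 - p - u))).

Lemma Hf_cont (p : R) : 0 < p < 1 -> continuity_pt (Hf p) 0.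
Proof.
  intros Hp. pose proof PI_RGT_0. apply ex_derive_cont. unfold Hf. auto_derive.
  repeat split; try lra.
  all: try (apply Rinv_0_lt_compat; repeat rewrite Rminus_0_r; apply Rmult_lt_0_compat; [apply Rmult_lt_0_compat|]; nra).
  all: try (repeat rewrite Rminus_0_r; apply Rgt_not_eq; apply Rmult_lt_0_compat; [apply Rmult_lt_0_compat|]; nra).
  all: idtac.
Qed.

Lemma Hf_0 (p : R) : 0 < p < 1 -> Hf p 0 = sqrt (/ (2 * PI * p * (1 - p))).
Proof.
  intros Hp. unfold Hf. rewrite !Rminus_0_r.
  replace (0 / 4 + 0 / (4 * p) + 0 / (4 * (1 - p))) with 0 by (field; lra).
  rewrite exp_0. replace (1 + 0/2) with 1 by field. rewrite sqrt_1. ring.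
Qed.

Lemma ab_upper (p : R) (k l : nat) : 0 < p < 1 -> (1 <= k)%nat -> (1 <= l)%nat ->
  sqrt (INR (k + l)) * ab p (k + l) k <=
  exp (/ (4 * INR (k + l)) + / (4 * INR k) + / (4 * INR l)) * sqrt (1 + / (2 * INR (k + l))) *
  sqrt (INR (k + l) * INR (k + l) / (2 * PI * INR k * INR l)).
Proof.
  intros Hp Hk Hl. pose proof PI_RGT_0.
  assert (1 <= INR k) by (apply (le_INR 1); auto).
  assert (1 <= INR l) by (apply (le_INR 1); auto).
  assert (Hn : 1 <= INR (k + l)) by (rewrite plus_INR; lra).
  rewrite ab_st by auto.
  destruct (stirling (k + l) ltac:(lia)) as [_ Sn].
  destruct (stirling k Hk) as [Sk _]. destruct (stirling l Hl) as [Sl _].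
  pose proof (fterm_le1 p k l Hp Hk Hl) as F1.
  destruct (fterm_ln p k l Hp Hk Hl) as [F0 _].
  set (n := INR (k + l)) in *.
  assert (Pk : 0 < 2 * PI * INR k * INR l) by (apply Rmult_lt_0_compat; [apply Rmult_lt_0_compat; [apply Rmult_lt_0_compat|]|]; lra).
  assert (Esq : sqrt n * sqrt (n / (2 * PI * INR k * INR l)) = sqrt (n * n / (2 * PI * INR k * INR l))).
  { rewrite <- sqrt_mult. f_equal. field. lra. lra. apply Rlt_le, Rdiv_lt_0_compat; lra. }
  assert (Hstk : 0 < st k) by (apply st_pos; auto). assert (Hstl : 0 < st l) by (apply st_pos; auto).
  assert (Ik : / st k <= exp (/ (4 * INR k))).
  { replace (exp (/ (4 * INR k))) with (/ exp (- / (4 * INR k))) by (rewrite exp_Ropp; field; apply Rgt_not_eq, exp_pos).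
    apply Rinv_le_contravar; auto. apply exp_pos. }
  assert (Il : / st l <= exp (/ (4 * INR l))).
  { replace (exp (/ (4 * INR l))) with (/ exp (- / (4 * INR l))) by (rewrite exp_Ropp; field; apply Rgt_not_eq, exp_pos).
    apply Rinv_le_contravar; auto. apply exp_pos. }
  rewrite !exp_plus.
  assert (0 <= sqrt (n / (2 * PI * INR k * INR l))) by apply sqrt_pos.
  assert (0 <= sqrt n) by apply sqrt_pos.
  assert (0 < st (k + l)) by (apply st_pos; lia).
  replace (sqrt n * (st (k + l) / (st k * st l) * sqrt (n / (2 * PI * INR k * INR l)) * fterm p k l))
    with ((st (k + l) * / st k * / st l) * (sqrt n * sqrt (n / (2 * PI * INR k * INR l))) * fterm p k l)
    by (field; lra).
  rewrite Esq.
  assert (0 <= sqrt (n * n / (2 * PI * INR k * INR l))) by apply sqrt_pos.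
  apply Rle_trans with ((st (k + l) * / st k * / st l) * sqrt (n * n / (2 * PI * INR k * INR l))).
  { rewrite <- (Rmult_1_r (st (k + l) * / st k * / st l * sqrt (n * n / (2 * PI * INR k * INR l)))) at 2.
    apply Rmult_le_compat_l; [|lra].
    apply Rmult_le_pos; auto. apply Rmult_le_pos; [apply Rmult_le_pos|]; try lra;
    apply Rlt_le, Rinv_0_lt_compat; auto. }
  apply Rmult_le_compat_r; auto.
  replace (exp (/ (4 * n)) * exp (/ (4 * INR k)) * exp (/ (4 * INR l)) * sqrt (1 + / (2 * n)))
    with ((exp (/ (4 * n)) * sqrt (1 + / (2 * n))) * exp (/ (4 * INR k)) * exp (/ (4 * INR l))) by ring.
  apply Rmult_le_compat; try (apply Rlt_le, Rinv_0_lt_compat; auto); auto.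
  apply Rmult_le_pos; [lra | apply Rlt_le, Rinv_0_lt_compat; auto].
  apply Rmult_le_compat; try (apply Rlt_le, Rinv_0_lt_compat; auto); auto. lra.
Qed.

Lemma inv_bound (a x u : R) : 0 < a -> 0 < u -> 0 < x -> a <= x * u -> / x <= u / a.
Proof.
  intros Ha Hu Hx H. replace (/ x) with (u * / (x * u)) by (field; lra).
  unfold Rdiv. apply Rmult_le_compat_l; [lra|]. apply Rinv_le_contravar; lra.
Qed.

Lemma sqrt_le_m (x y : R) : x <= y -> sqrt x <= sqrt y.
Proof. intros H. apply sqrt_le_1_alt. auto. Qed.

Lemma UB (p : R) : 0 < p < 1 -> forall eps, 0 < eps -> exists N : nat, (1 <= N)%nat /\
  forall n, (N <= n)%nat -> sqrt (INR n) * ab p n (mo p n) <= sqrt (/ (2 * PI * p * (1 - p))) + eps.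
Proof.
  intros Hp eps He. pose proof PI_RGT_0.
  destruct (cont_eps (Hf p) (Hf_cont p Hp) eps He) as [del [Hdel Hc]].
  set (eta := Rmin del (Rmin (p/2) ((1-p)/2))).
  assert (Heta : 0 < eta) by (unfold eta; repeat apply Rmin_pos; lra).
  destruct (small_n eta Heta) as [N [HN1 HNn]]. exists N. split; auto. intros n Hn.
  assert (Hn1 : 1 <= INR n) by (apply (le_INR 1); lia).
  set (u := / INR n).
  assert (Hu : u < eta) by (apply HNn; auto).
  assert (Hu0 : 0 < u) by (unfold u; apply Rinv_0_lt_compat; lra).
  assert (Hnu : INR n * u = 1) by (unfold u; field; lra).
  assert (Hu1 : u < del) by (pose proof (Rmin_l del (Rmin (p/2) ((1-p)/2))); unfold eta in Hu; lra).
  assert (Hu2 : u < p / 2) by (pose proof (Rmin_r del (Rmin (p/2) ((1-p)/2))); pose proof (Rmin_l (p/2) ((1-p)/2)); unfold eta in Hu; lra).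
  assert (Hu3 : u < (1 - p) / 2) by (pose proof (Rmin_r del (Rmin (p/2) ((1-p)/2))); pose proof (Rmin_r (p/2) ((1-p)/2)); unfold eta in Hu; lra).
  destruct (mo_spec p n Hp) as [[M1 M2] Mn].
  set (k := mo p n) in *. set (l := (n - k)%nat).
  rewrite S_INR in M1, M2.
  assert (Hnp : 2 < INR n * p) by nra.
  assert (Hnq : 2 < INR n * (1 - p)) by nra.
  assert (Hk : INR n * p - 1 <= INR k) by nra.
  assert (Hl : INR l = INR n - INR k) by (unfold l; apply minus_INR; auto).
  assert (Hl' : INR n * (1 - p) - 1 <= INR l) by nra.
  assert (Hk1 : (1 <= k)%nat) by (apply INR_le; simpl; lra).
  assert (Hl1 : (1 <= l)%nat) by (apply INR_le; simpl; lra).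
  replace n with (k + l)%nat at 1 2 by (unfold l; lia).
  eapply Rle_trans. apply ab_upper; auto.
  replace (INR (k + l)) with (INR n) by (f_equal; unfold l; lia).
  assert (Hf1 : Hf p u <= sqrt (/ (2 * PI * p * (1 - p))) + eps).
  { rewrite <- Hf_0 by auto. assert (0 <= u < del) by lra. specialize (Hc u H0).
    apply Rabs_def2 in Hc. lra. }
  eapply Rle_trans; [|exact Hf1]. unfold Hf.
  assert (E1 : / (4 * INR n) = u / 4) by (unfold u; field; lra).
  assert (E2 : / (2 * INR n) = u / 2) by (unfold u; field; lra).
  rewrite E1, E2.
  assert (B1 : / (4 * INR k) <= u / (4 * (p - u))).
  { replace (/ (4 * INR k)) with (/4 * / INR k) by (field; lra).
    replace (u / (4 * (p - u))) with (/4 * (u / (p - u))) by (field; lra).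
    apply Rmult_le_compat_l. lra. apply inv_bound; try lra. nra. }
  assert (B2 : / (4 * INR l) <= u / (4 * (1 - p - u))).
  { replace (/ (4 * INR l)) with (/4 * / INR l) by (field; lra).
    replace (u / (4 * (1 - p - u))) with (/4 * (u / (1 - p - u))) by (field; lra).
    apply Rmult_le_compat_l. lra. apply inv_bound; try lra. nra. }
  assert (B3 : INR n * INR n / (2 * PI * INR k * INR l) <= / (2 * PI * (p - u) * (1 - p - u))).
  { assert (Kp : (p - u) * INR n <= INR k) by nra.
    assert (Lp : (1 - p - u) * INR n <= INR l) by nra.
    assert (0 < p - u) by lra. assert (0 < 1 - p - u) by lra.
    assert (Q : (p - u) * (1 - p - u) * (INR n * INR n) <= INR k * INR l).
    { replace ((p - u) * (1 - p - u) * (INR n * INR n)) with (((p - u) * INR n) * ((1 - p - u) * INR n)) by ring.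
      apply Rmult_le_compat; nra. }
    replace (/ (2 * PI * (p - u) * (1 - p - u))) with (INR n * INR n / (2 * PI * ((p - u) * (1 - p - u) * (INR n * INR n))))
      by (field; repeat split; lra).
    unfold Rdiv. apply Rmult_le_compat_l. nra.
    apply Rinv_le_contravar. apply Rmult_lt_0_compat; [lra|]. apply Rmult_lt_0_compat; [nra|nra].
    replace (2 * PI * INR k * INR l) with (2 * PI * (INR k * INR l)) by ring.
    apply Rmult_le_compat_l; lra. }
  apply Rmult_le_compat.
  - apply Rmult_le_pos; [apply Rlt_le, exp_pos | apply sqrt_pos].
  - apply sqrt_pos.
  - apply Rmult_le_compat_r. apply sqrt_pos. apply exp_le_m. lra.
  - apply sqrt_le_m. auto.
Qed.

Lemma ab_lower (p : R) (k l : nat) : 0 < p < 1 -> (1 <= k)%nat -> (1 <= l)%nat ->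
  exp (- / (4 * INR (k + l))) /
    (exp (/ (4 * INR k)) * sqrt (1 + / (2 * INR k)) * (exp (/ (4 * INR l)) * sqrt (1 + / (2 * INR l)))) *
  sqrt (2 / PI) *
  exp (- (INR k - INR (k + l) * p) ^ 2 / (INR (k + l) * p * (1 - p)))
  <= sqrt (INR (k + l)) * ab p (k + l) k.
Proof.
  intros Hp Hk Hl. pose proof PI_RGT_0.
  assert (1 <= INR k) by (apply (le_INR 1); auto).
  assert (1 <= INR l) by (apply (le_INR 1); auto).
  assert (Hn : INR (k + l) = INR k + INR l) by apply plus_INR.
  rewrite ab_st by auto.
  destruct (stirling (k + l) ltac:(lia)) as [Sn _].
  destruct (stirling k Hk) as [_ Sk]. destruct (stirling l Hl) as [_ Sl].
  pose proof (fterm_ge p k l Hp Hk Hl) as F1.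
  set (n := INR (k + l)) in *.
  assert (Pk : 0 < 2 * PI * INR k * INR l) by (apply Rmult_lt_0_compat; [apply Rmult_lt_0_compat; [apply Rmult_lt_0_compat|]|]; lra).
  assert (Esq : sqrt n * sqrt (n / (2 * PI * INR k * INR l)) = sqrt (n * n / (2 * PI * INR k * INR l))).
  { rewrite <- sqrt_mult. f_equal. field. lra. lra. apply Rlt_le, Rdiv_lt_0_compat; lra. }
  assert (Hsq : sqrt (2 / PI) <= sqrt (n * n / (2 * PI * INR k * INR l))).
  { apply sqrt_le_m.
    assert (4 * (INR k * INR l) <= n * n) by (rewrite Hn; pose proof (pow2_ge_0 (INR k - INR l)); nra).
    replace (2 / PI) with (4 * (INR k * INR l) / (2 * PI * INR k * INR l)) by (field; lra).
    unfold Rdiv. apply Rmult_le_compat_r; auto. apply Rlt_le, Rinv_0_lt_compat; auto. }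
  assert (Hstk : 0 < st k) by (apply st_pos; auto). assert (Hstl : 0 < st l) by (apply st_pos; auto).
  assert (0 < st (k + l)) by (apply st_pos; lia).
  replace (sqrt n * (st (k + l) / (st k * st l) * sqrt (n / (2 * PI * INR k * INR l)) * fterm p k l))
    with ((st (k + l) / (st k * st l)) * (sqrt n * sqrt (n / (2 * PI * INR k * INR l))) * fterm p k l)
    by (field; lra).
  rewrite Esq.
  assert (0 < sqrt (1 + / (2 * INR k))) by (apply sqrt_lt_R0; assert (0 < / (2 * INR k)) by (apply Rinv_0_lt_compat; lra); lra).
  assert (0 < sqrt (1 + / (2 * INR l))) by (apply sqrt_lt_R0; assert (0 < / (2 * INR l)) by (apply Rinv_0_lt_compat; lra); lra).
  pose proof (exp_pos (/ (4 * INR k))). pose proof (exp_pos (/ (4 * INR l))).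
  pose proof (exp_pos (- / (4 * n))).
  pose proof (exp_pos (- (INR k - n * p) ^ 2 / (n * p * (1 - p)))).
  apply Rmult_le_compat.
  - apply Rmult_le_pos; [|apply sqrt_pos]. apply Rlt_le, Rdiv_lt_0_compat; auto.
    apply Rmult_lt_0_compat; apply Rmult_lt_0_compat; auto.
  - lra.
  - apply Rmult_le_compat; auto.
    + apply Rlt_le, Rdiv_lt_0_compat; auto.
      apply Rmult_lt_0_compat; apply Rmult_lt_0_compat; auto.
    + apply sqrt_pos.
    + unfold Rdiv. apply Rmult_le_compat; auto. lra.
      apply Rlt_le, Rinv_0_lt_compat. apply Rmult_lt_0_compat; apply Rmult_lt_0_compat; auto.
      apply Rinv_le_contravar. apply Rmult_lt_0_compat; auto.
      apply Rmult_le_compat; lra.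
  - auto.
Qed.

Definition Lf (p : R) (v : R) : R :=
  exp (- (v ^ 2 / 4)) /
    (exp (v ^ 2 / (4 * (p - v ^ 2))) * sqrt (1 + v ^ 2 / (2 * (p - v ^ 2))) *
     (exp (v ^ 2 / (4 * (1 - p - v ^ 2 - v / 2))) * sqrt (1 + v ^ 2 / (2 * (1 - p - v ^ 2 - v / 2))))) *
  sqrt (2 / PI) * exp (- (v + / 2) ^ 2 / (p * (1 - p))).

Lemma Lf_cont (p : R) : 0 < p < 1 -> continuity_pt (Lf p) 0.
Proof.
  intros Hp. pose proof PI_RGT_0. apply ex_derive_cont. unfold Lf. auto_derive.
  repeat split; try lra.
  repeat rewrite Rmult_0_l. repeat rewrite Rplus_0_r. rewrite exp_0, sqrt_1. lra.
Qed.

Lemma Lf_0 (p : R) : 0 < p < 1 -> Lf p 0 = sqrt (2 / PI) * exp (- / (4 * (p * (1 - p)))).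
Proof.
  intros Hp. unfold Lf.
  replace (0 ^ 2 / 4) with 0 by (simpl; field).
  replace (0 ^ 2 / (4 * (p - 0 ^ 2))) with 0 by (simpl; field; lra).
  replace (0 ^ 2 / (2 * (p - 0 ^ 2))) with 0 by (simpl; field; lra).
  replace (0 ^ 2 / (4 * (1 - p - 0 ^ 2 - 0 / 2))) with 0 by (simpl; field; lra).
  replace (0 ^ 2 / (2 * (1 - p - 0 ^ 2 - 0 / 2))) with 0 by (simpl; field; lra).
  rewrite Ropp_0, exp_0, Rplus_0_r, sqrt_1.
  replace (- (0 + / 2) ^ 2 / (p * (1 - p))) with (- / (4 * (p * (1 - p)))) by (field; lra).
  field.
Qed.

Lemma sum_pos_le_mono (f : nat -> R) (a b : nat) : (forall i, 0 <= f i) -> (a <= b)%nat ->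
  sum_f_R0 f a <= sum_f_R0 f b.
Proof.
  intros Hf Hab. induction Hab. lra. simpl. pose proof (Hf (S m)). lra.
Qed.

Lemma sub_sum (f : nat -> R) (m w n : nat) : (forall i, 0 <= f i) -> (m + w <= n)%nat ->
  sum_f_R0 (fun i => f (m + i)%nat) w <= sum_f_R0 f n.
Proof.
  intros Hf Hmw. apply Rle_trans with (sum_f_R0 f (m + w)); [|apply sum_pos_le_mono; auto].
  clear Hmw. induction w as [|w IH].
  - simpl. rewrite Nat.add_0_r. destruct m. simpl. lra. simpl.
    pose proof (cond_pos_sum f m Hf). lra.
  - simpl. replace (m + S w)%nat with (S (m + w)) by lia. simpl. lra.
Qed.

Lemma ab_dec (p : R) (n i j : nat) : 0 < p < 1 -> (mo p n <= i)%nat -> (i + j <= n)%nat ->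
  ab p n (i + j) <= ab p n i.
Proof.
  intros Hp Hi. destruct (mo_spec p n Hp) as [[M1 M2] Mn].
  set (m := mo p n) in *. rewrite S_INR in M1, M2.
  induction j as [|j IH]; intros Hj.
  - rewrite Nat.add_0_r. lra.
  - apply Rle_trans with (ab p n (i + j)); [|apply IH; lia].
    replace (i + S j)%nat with (S (i + j)) by lia.
    rewrite (ab_step p n (i + j) Hp) by lia.
    assert (INR m <= INR (i + j)) by (apply le_INR; lia).
    assert (INR (i + j) <= INR n) by (apply le_INR; lia).
    pose proof (ab_nonneg p n (i + j) Hp).
    assert ((INR n - INR (i + j)) * p / ((INR (i + j) + 1) * (1 - p)) <= 1).
    { pose proof (pos_INR (i + j)).
      apply (Rmult_le_reg_r ((INR (i + j) + 1) * (1 - p))). nra.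
      unfold Rdiv. rewrite Rmult_assoc, Rinv_l by nra. nra. }
    assert (0 <= (INR n - INR (i + j)) * p / ((INR (i + j) + 1) * (1 - p))).
    { apply Rmult_le_pos. nra. apply Rlt_le, Rinv_0_lt_compat. pose proof (pos_INR (i + j)). nra. }
    nra.
Qed.

Lemma nat_sqrt_bounds (n : nat) :
  INR (Nat.sqrt n) <= sqrt (INR n) < INR (Nat.sqrt n) + 1.
Proof.
  destruct (Nat.sqrt_spec n (Nat.le_0_l n)) as [H1 H2].
  apply le_INR in H1. apply lt_INR in H2. rewrite mult_INR in H1, H2. rewrite S_INR in H2.
  pose proof (pos_INR (Nat.sqrt n)).
  split.
  - rewrite <- (sqrt_square (INR (Nat.sqrt n))) by lra. apply sqrt_le_m. auto.
  - rewrite <- (sqrt_square (INR (Nat.sqrt n) + 1)) by lra.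
    apply sqrt_lt_1_alt. split. apply pos_INR. auto.
Qed.

Lemma const_cmp (p : R) : 0 < p < 1 ->
  sqrt (/ (2 * PI * p * (1 - p))) * exp (- / (2 * (p * (1 - p)))) <=
  / 2 * (sqrt (2 / PI) * exp (- / (4 * (p * (1 - p))))).
Proof.
  intros Hp. pose proof PI_RGT_0.
  assert (Hq : 0 < p * (1 - p)) by nra.
  set (t := / (p * (1 - p))).
  assert (Ht : 0 < t) by (apply Rinv_0_lt_compat; auto).
  assert (E1 : sqrt (/ (2 * PI * p * (1 - p))) = sqrt t * sqrt (/ (2 * PI))).
  { rewrite <- sqrt_mult by (apply Rlt_le; try apply Rinv_0_lt_compat; lra).
    f_equal. unfold t. field. lra. }
  assert (E2 : / 2 * sqrt (2 / PI) = sqrt (/ (2 * PI))).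
  { replace (/ 2) with (sqrt (/ 4)).
    rewrite <- sqrt_mult by (try apply Rlt_le; try apply Rdiv_lt_0_compat; try apply Rinv_0_lt_compat; lra).
    f_equal. field. lra.
    replace (/ 4) with (/ 2 * / 2) by field. apply sqrt_square. lra. }
  assert (E3 : - / (2 * (p * (1 - p))) = - (t / 2)) by (unfold t; field; lra).
  assert (E4 : - / (4 * (p * (1 - p))) = t / 4 + - (t / 2)) by (unfold t; field; lra).
  rewrite E1, E3, E4, exp_plus. rewrite <- Rmult_assoc, E2.
  assert (St : sqrt t <= exp (t / 4)).
  { apply Rle_trans with (1 + t / 4). 
    rewrite <- (sqrt_square (1 + t / 4)) by lra. apply sqrt_le_m. pose proof (pow2_ge_0 (1 - t / 4)). nra.
    apply exp_ineq1_le. }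
  pose proof (exp_pos (- (t / 2))).
  assert (0 < sqrt (/ (2 * PI))) by (apply sqrt_lt_R0, Rinv_0_lt_compat; lra).
  replace (sqrt t * sqrt (/ (2 * PI)) * exp (- (t / 2))) with (sqrt (/ (2 * PI)) * (sqrt t * exp (- (t / 2)))) by ring.
  replace (sqrt (/ (2 * PI)) * (exp (t / 4) * exp (- (t / 2)))) with (sqrt (/ (2 * PI)) * (exp (t / 4) * exp (- (t / 2)))) by ring.
  apply Rmult_le_compat_l. lra. apply Rmult_le_compat_r; lra.
Qed.

Lemma LB (p : R) (d : nat) : 0 < p < 1 -> (2 <= d)%nat -> exists N : nat, (1 <= N)%nat /\
  forall n, (N <= n)%nat ->
  (sqrt (/ (2 * PI * p * (1 - p))) * exp (- / (2 * (p * (1 - p))))) ^ d / sqrt (INR n) ^ (d - 1)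
  <= sum_f_R0 (fun k => ab p n k ^ d) n.
Proof.
  intros Hp Hd. pose proof PI_RGT_0.
  set (L0 := Lf p 0).
  assert (HL0 : 0 < L0).
  { unfold L0. rewrite Lf_0 by auto. apply Rmult_lt_0_compat; [|apply exp_pos].
    apply sqrt_lt_R0. apply Rdiv_lt_0_compat; lra. }
  destruct (cont_eps (Lf p) (Lf_cont p Hp) (L0 / 5) ltac:(lra)) as [del [Hdel Hc]].
  set (eta := Rmin del (Rmin 1 (Rmin (p/2) ((1-p)/5)))).
  assert (Heta : 0 < eta) by (unfold eta; repeat apply Rmin_pos; lra).
  assert (Ee1 : eta <= del) by apply Rmin_l.
  assert (Ee2 : eta <= 1) by (unfold eta; pose proof (Rmin_r del (Rmin 1 (Rmin (p/2) ((1-p)/5)))); pose proof (Rmin_l 1 (Rmin (p/2) ((1-p)/5))); lra).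
  assert (Ee3 : eta <= p / 2) by (unfold eta; pose proof (Rmin_r del (Rmin 1 (Rmin (p/2) ((1-p)/5)))); pose proof (Rmin_r 1 (Rmin (p/2) ((1-p)/5))); pose proof (Rmin_l (p/2) ((1-p)/5)); lra).
  assert (Ee4 : eta <= (1 - p) / 5) by (unfold eta; pose proof (Rmin_r del (Rmin 1 (Rmin (p/2) ((1-p)/5)))); pose proof (Rmin_r 1 (Rmin (p/2) ((1-p)/5))); pose proof (Rmin_r (p/2) ((1-p)/5)); lra).
  destruct (small_n (eta * eta) ltac:(nra)) as [N [HN1 HNn]]. exists N. split; auto. intros n Hn.
  assert (Hn1 : 1 <= INR n) by (apply (le_INR 1); lia).
  set (sv := sqrt (INR n)).
  assert (Hsv : 0 < sv) by (apply sqrt_lt_R0; lra).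
  assert (Hsv2 : sv * sv = INR n) by (apply sqrt_sqrt; lra).
  set (v := / sv).
  assert (Hv0 : 0 < v) by (apply Rinv_0_lt_compat; auto).
  assert (Hvs : v * sv = 1) by (unfold v; field; lra).
  assert (Hvn : v * v * INR n = 1) by (rewrite <- Hsv2; unfold v; field; lra).
  assert (Hv2 : v * v < eta * eta).
  { replace (v * v) with (/ INR n) by (rewrite <- Hsv2; unfold v; field; lra). apply HNn; auto. }
  assert (Hv : v < eta).
  { destruct (Rlt_or_le v eta) as [|Hge]; auto.
    assert (eta * eta <= v * v) by (apply Rmult_le_compat; lra). lra. }
  assert (Hvv : v * v < v) by (assert (v * v < v * 1) by (apply Rmult_lt_compat_l; lra); lra).
  destruct (mo_spec p n Hp) as [[M1 M2] Mn].
  set (m := mo p n) in *. rewrite S_INR in M1, M2.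
  rewrite Rmult_plus_distr_r, Rmult_1_l in M1, M2.
  destruct (nat_sqrt_bounds n) as [S1 S2]. fold sv in S1, S2.
  set (s := Nat.sqrt n) in *.
  set (w := (s / 2)%nat).
  assert (Hw1 : (2 * w <= s)%nat) by (unfold w; pose proof (Nat.div_mod s 2); pose proof (Nat.mod_upper_bound s 2); lia).
  assert (Hw2 : (s <= 2 * w + 1)%nat) by (unfold w; pose proof (Nat.div_mod s 2); pose proof (Nat.mod_upper_bound s 2); lia).
  apply le_INR in Hw1. apply le_INR in Hw2. rewrite mult_INR in Hw1. rewrite plus_INR, mult_INR in Hw2.
  simpl INR in Hw1, Hw2.
  pose proof (pos_INR w) as Hw0.
  set (k := (m + w)%nat).
  assert (Hk : INR k = INR m + INR w) by (unfold k; apply plus_INR).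
  assert (HnV : INR n * v = sv) by (rewrite <- Hsv2; unfold v; field; lra).
  assert (Hq1 : v * v + v / 2 < (1 - p) - v * v) by lra.
  assert (EL : INR n * (1 - p - v ^ 2 - v / 2) = INR n - INR n * p - 1 - sv / 2).
  { transitivity (INR n - INR n * p - v * v * INR n - (INR n * v) / 2); [field|].
    rewrite Hvn, HnV. field. }
  assert (EK : INR n * (p - v ^ 2) = INR n * p - 1).
  { transitivity (INR n * p - v * v * INR n); [ring|]. rewrite Hvn. ring. }
  assert (GL : INR n * (1 - p - v ^ 2 - v / 2) > 1).
  { assert (0 < INR n * ((1 - p - v ^ 2 - v / 2) - v * v)).
    { apply Rmult_lt_0_compat. lra. simpl. lra. }
    assert (INR n * ((1 - p - v ^ 2 - v / 2) - v * v) = INR n * (1 - p - v ^ 2 - v / 2) - 1).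
    { transitivity (INR n * (1 - p - v ^ 2 - v / 2) - v * v * INR n); [field|]. rewrite Hvn. field. }
    lra. }
  assert (GK : INR n * (p - v ^ 2) > 1).
  { assert (0 < INR n * ((p - v ^ 2) - v * v)).
    { apply Rmult_lt_0_compat. lra. simpl. lra. }
    assert (INR n * ((p - v ^ 2) - v * v) = INR n * (p - v ^ 2) - 1).
    { transitivity (INR n * (p - v ^ 2) - v * v * INR n); [ring|]. rewrite Hvn. ring. }
    lra. }
  assert (Hkn : INR k + 1 < INR n) by lra.
  assert (Hkn' : (k <= n)%nat) by (apply INR_le; lra).
  set (l := (n - k)%nat).
  assert (Hl : INR l = INR n - INR k) by (unfold l; apply minus_INR; auto).
  assert (Hlb : INR n * (1 - p - v ^ 2 - v / 2) <= INR l) by lra.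
  assert (Hkb : INR n * (p - v ^ 2) <= INR k) by lra.
  assert (Hk1 : (1 <= k)%nat) by (apply INR_le; simpl; lra).
  assert (Hl1 : (1 <= l)%nat) by (apply INR_le; simpl; lra).
  assert (Hab : 4 / 5 * L0 <= sv * ab p n k).
  { assert (HLv : 4 / 5 * L0 <= Lf p v).
    { assert (0 <= v < del) by lra. specialize (Hc v H0). apply Rabs_def2 in Hc. fold L0 in Hc. lra. }
    eapply Rle_trans; [exact HLv|].
    unfold sv. replace n with (k + l)%nat at 1 2 by (unfold l; lia).
    eapply Rle_trans; [|apply ab_lower; auto].
    replace (INR (k + l)) with (INR n) by (f_equal; unfold l; lia).
    unfold Lf.
    assert (E1 : - / (4 * INR n) = - (v ^ 2 / 4)) by (simpl; rewrite <- Hsv2; unfold v; field; lra).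
    rewrite E1.
    assert (Pa : 0 < p - v ^ 2) by (simpl; lra).
    assert (Pb : 0 < 1 - p - v ^ 2 - v / 2) by (simpl; lra).
    assert (0 < v ^ 2) by (simpl; rewrite Rmult_1_r; apply Rmult_lt_0_compat; lra).
    assert (Hkv : p - v ^ 2 <= INR k * v ^ 2).
    { apply Rmult_le_compat_r with (r := v ^ 2) in Hkb; [|lra].
      replace (INR n * (p - v ^ 2) * v ^ 2) with ((p - v ^ 2) * (v * v * INR n)) in Hkb by (simpl; ring).
      rewrite Hvn in Hkb. lra. }
    assert (Hlv : 1 - p - v ^ 2 - v / 2 <= INR l * v ^ 2).
    { apply Rmult_le_compat_r with (r := v ^ 2) in Hlb; [|lra].
      replace (INR n * (1 - p - v ^ 2 - v / 2) * v ^ 2) with ((1 - p - v ^ 2 - v / 2) * (v * v * INR n)) in Hlb by (simpl; ring).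
      rewrite Hvn in Hlb. lra. }
    assert (1 <= INR k) by (apply (le_INR 1); auto). assert (1 <= INR l) by (apply (le_INR 1); auto).
    assert (Ik : / INR k <= v ^ 2 / (p - v ^ 2)) by (apply inv_bound; lra).
    assert (Il : / INR l <= v ^ 2 / (1 - p - v ^ 2 - v / 2)) by (apply inv_bound; lra).
    assert (Ik4 : / (4 * INR k) <= v ^ 2 / (4 * (p - v ^ 2))).
    { replace (/ (4 * INR k)) with (/4 * / INR k) by (field; lra).
      replace (v ^ 2 / (4 * (p - v ^ 2))) with (/4 * (v ^ 2 / (p - v ^ 2))) by (field; lra). lra. }
    assert (Il4 : / (4 * INR l) <= v ^ 2 / (4 * (1 - p - v ^ 2 - v / 2))).
    { replace (/ (4 * INR l)) with (/4 * / INR l) by (field; lra).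
      replace (v ^ 2 / (4 * (1 - p - v ^ 2 - v / 2))) with (/4 * (v ^ 2 / (1 - p - v ^ 2 - v / 2))) by (field; lra). lra. }
    assert (Ik2 : / (2 * INR k) <= v ^ 2 / (2 * (p - v ^ 2))).
    { replace (/ (2 * INR k)) with (/2 * / INR k) by (field; lra).
      replace (v ^ 2 / (2 * (p - v ^ 2))) with (/2 * (v ^ 2 / (p - v ^ 2))) by (field; lra). lra. }
    assert (Il2 : / (2 * INR l) <= v ^ 2 / (2 * (1 - p - v ^ 2 - v / 2))).
    { replace (/ (2 * INR l)) with (/2 * / INR l) by (field; lra).
      replace (v ^ 2 / (2 * (1 - p - v ^ 2 - v / 2))) with (/2 * (v ^ 2 / (1 - p - v ^ 2 - v / 2))) by (field; lra). lra. }
    assert (Pk2 : 0 < / (2 * INR k)) by (apply Rinv_0_lt_compat; lra).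
    assert (Pl2 : 0 < / (2 * INR l)) by (apply Rinv_0_lt_compat; lra).
    assert (Dk : exp (/ (4 * INR k)) * sqrt (1 + / (2 * INR k)) * (exp (/ (4 * INR l)) * sqrt (1 + / (2 * INR l)))
       <= exp (v ^ 2 / (4 * (p - v ^ 2))) * sqrt (1 + v ^ 2 / (2 * (p - v ^ 2))) *
          (exp (v ^ 2 / (4 * (1 - p - v ^ 2 - v / 2))) * sqrt (1 + v ^ 2 / (2 * (1 - p - v ^ 2 - v / 2))))).
    { apply Rmult_le_compat.
      - apply Rmult_le_pos; [apply Rlt_le, exp_pos | apply sqrt_pos].
      - apply Rmult_le_pos; [apply Rlt_le, exp_pos | apply sqrt_pos].
      - apply Rmult_le_compat; try apply Rlt_le, exp_pos; try apply sqrt_pos.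
        apply exp_le_m; auto. apply sqrt_le_m; lra.
      - apply Rmult_le_compat; try apply Rlt_le, exp_pos; try apply sqrt_pos.
        apply exp_le_m; auto. apply sqrt_le_m; lra. }
    assert (Dpos : 0 < exp (/ (4 * INR k)) * sqrt (1 + / (2 * INR k)) * (exp (/ (4 * INR l)) * sqrt (1 + / (2 * INR l)))).
    { apply Rmult_lt_0_compat; apply Rmult_lt_0_compat; try apply exp_pos; apply sqrt_lt_R0; lra. }
    assert (Ex : exp (- (v + / 2) ^ 2 / (p * (1 - p))) <= exp (- (INR k - INR n * p) ^ 2 / (INR n * p * (1 - p)))).
    { apply exp_le_m.
      assert (Hx1 : -1 <= INR k - INR n * p) by (rewrite Hk; lra).
      assert (Hx2 : INR k - INR n * p <= 1 + sv / 2) by (rewrite Hk; lra).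
      assert (Sq : (INR k - INR n * p) ^ 2 <= (1 + sv / 2) ^ 2).
      { set (x := INR k - INR n * p) in *. set (y := 1 + sv / 2) in *.
        assert (Hy : 1 <= y) by (unfold y; lra).
        assert (0 <= (y - x) * (y + x)) by (apply Rmult_le_pos; lra).
        assert (E : y ^ 2 - x ^ 2 = (y - x) * (y + x)) by ring. lra. }
      assert (Eq : (1 + sv / 2) ^ 2 / INR n = (v + / 2) ^ 2).
      { rewrite <- Hsv2. unfold v. field. lra. }
      assert (0 < p * (1 - p)) by nra.
      replace (- (INR k - INR n * p) ^ 2 / (INR n * p * (1 - p))) with
        (- ((INR k - INR n * p) ^ 2 / INR n / (p * (1 - p)))) by (field; lra).
      replace (- (v + / 2) ^ 2 / (p * (1 - p))) with (- ((v + / 2) ^ 2 / (p * (1 - p)))) by (field; lra).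
      apply Ropp_le_contravar. unfold Rdiv. apply Rmult_le_compat_r. apply Rlt_le, Rinv_0_lt_compat; auto.
      rewrite <- Eq. unfold Rdiv. apply Rmult_le_compat_r. apply Rlt_le, Rinv_0_lt_compat; lra. auto. }
    pose proof (exp_pos (- (v + / 2) ^ 2 / (p * (1 - p)))).
    assert (0 < sqrt (2 / PI)) by (apply sqrt_lt_R0, Rdiv_lt_0_compat; lra).
    apply Rmult_le_compat.
    - apply Rmult_le_pos; [|lra]. apply Rlt_le, Rdiv_lt_0_compat. apply exp_pos. lra.
    - lra.
    - apply Rmult_le_compat_r. lra. unfold Rdiv. apply Rmult_le_compat_l. apply Rlt_le, exp_pos.
      apply Rinv_le_contravar; auto.
    - auto. }
  assert (Hab0 : forall j, 0 <= ab p n j) by (intros; apply ab_nonneg; auto).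
  assert (Hsub : sum_f_R0 (fun i => ab p n (m + i) ^ d) w <= sum_f_R0 (fun j => ab p n j ^ d) n).
  { apply (sub_sum (fun j => ab p n j ^ d)). intros; apply pow_le; auto. unfold k in Hkn'; lia. }
  assert (Hcst : sum_f_R0 (fun _ => ab p n k ^ d) w <= sum_f_R0 (fun i => ab p n (m + i) ^ d) w).
  { apply sum_Rle. intros i Hi. apply pow_incr. split; auto.
    replace k with ((m + i) + (w - i))%nat by (unfold k; lia).
    apply ab_dec; auto. unfold m; lia. unfold k in Hkn'; lia. }
  rewrite sum_cte in Hcst.
  assert (HW : sv / 2 <= INR (S w)) by (rewrite S_INR; lra).
  assert (Hak : 4 / 5 * L0 * v <= ab p n k).
  { apply Rmult_le_compat_r with (r := v) in Hab; [|lra].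
    replace (sv * ab p n k * v) with (ab p n k * (v * sv)) in Hab by ring.
    rewrite Hvs in Hab. lra. }
  set (B := sqrt (/ (2 * PI * p * (1 - p))) * exp (- / (2 * (p * (1 - p))))).
  assert (HB : B <= L0 / 2).
  { unfold B, L0. rewrite Lf_0 by auto. pose proof (const_cmp p Hp). lra. }
  assert (HB0 : 0 <= B).
  { unfold B. apply Rmult_le_pos; [apply sqrt_pos | apply Rlt_le, exp_pos]. }
  destruct d as [|d']; [lia|]. replace (S d' - 1)%nat with d' by lia.
  assert (Hinv : / sv ^ d' = v ^ d') by (unfold v; rewrite pow_inv; reflexivity).
  unfold Rdiv. rewrite Hinv.
  assert (P85 : 2 <= (8 / 5) ^ S d').
  { apply Rle_trans with ((8/5) ^ 2). simpl; lra. apply Rle_pow. lra. lia. }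
  assert (Hvd : 0 <= v ^ d') by (apply pow_le; lra).
  assert (HL2 : 0 <= (L0 / 2) ^ S d') by (apply pow_le; lra).
  apply Rle_trans with (ab p n k ^ S d' * INR (S w)); [|lra].
  apply Rle_trans with ((4 / 5 * L0 * v) ^ S d' * (sv / 2)).
  2:{ apply Rmult_le_compat. apply pow_le. nra. lra. apply pow_incr. split; [nra|auto]. auto. }
  replace ((4 / 5 * L0 * v) ^ S d' * (sv / 2)) with ((8/5) ^ S d' * (L0 / 2) ^ S d' * v ^ d' * (v * sv) / 2).
  2:{ replace (4 / 5 * L0 * v) with ((8/5) * (L0 / 2) * v) by field.
      rewrite !Rpow_mult_distr. simpl pow. field. }
  rewrite Hvs.
  assert (B ^ S d' <= (L0 / 2) ^ S d') by (apply pow_incr; lra).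
  assert ((L0 / 2) ^ S d' * v ^ d' <= (8 / 5) ^ S d' * (L0 / 2) ^ S d' * v ^ d' * 1 / 2).
  { replace ((8 / 5) ^ S d' * (L0 / 2) ^ S d' * v ^ d' * 1 / 2) with (((8 / 5) ^ S d' / 2) * ((L0 / 2) ^ S d' * v ^ d')) by field.
    rewrite <- (Rmult_1_l ((L0 / 2) ^ S d' * v ^ d')) at 1.
    apply Rmult_le_compat_r. apply Rmult_le_pos; auto. lra. }
  apply Rle_trans with ((L0 / 2) ^ S d' * v ^ d'); auto.
  apply Rmult_le_compat_r; auto.
Qed.

Lemma prod_pos (f : nat -> R) (N : nat) : (forall j, (j <= N)%nat -> 0 < f j) -> 0 < prod_f_R0 f N.
Proof.
  induction N as [|N IH]; intros H; simpl. apply H; lia.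
  apply Rmult_lt_0_compat. apply IH; intros; apply H; lia. apply H; lia.
Qed.

Lemma Rpower_half (x : R) (d : nat) : 0 < x -> (1 <= d)%nat ->
  Rpower x (- (INR d - 1) / 2) = / sqrt x ^ (d - 1).
Proof.
  intros Hx Hd.
  replace (- (INR d - 1) / 2) with (- (/ 2 * INR (d - 1))) by (rewrite minus_INR by auto; simpl; field).
  rewrite Rpower_Ropp, <- Rpower_mult, Rpower_sqrt, Rpower_pow by (auto; apply sqrt_lt_R0; auto).
  reflexivity.
Qed.

Lemma sum_ab_1 (p : R) (n : nat) : sum_f_R0 (fun k => ab p n k) n = 1.
Proof.
  unfold ab. rewrite <- binomial. replace (p + (1 - p)) with 1 by ring. apply pow1.
Qed.

Lemma binom_ab (r : R) (d n : nat) : 0 < r ->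
  binom_pow_sum d n (r ^ d) = (1 + r) ^ (d * n) * sum_f_R0 (fun k => ab (r / (1 + r)) n k ^ d) n.
Proof.
  intros Hr. unfold binom_pow_sum. rewrite scal_sum. apply sum_eq. intros k Hk.
  assert (E : Binomial.C n k * r ^ k = (1 + r) ^ n * ab (r / (1 + r)) n k).
  { unfold ab. replace (1 - r / (1 + r)) with (/ (1 + r)) by (field; lra).
    replace n with (k + (n - k))%nat at 2 by lia. rewrite pow_add.
    unfold Rdiv. rewrite Rpow_mult_distr, !pow_inv.
    assert (0 < (1 + r) ^ k) by (apply pow_lt; lra).
    assert (0 < (1 + r) ^ (n - k)) by (apply pow_lt; lra).
    field. lra. }
  assert (E1 : (r ^ d) ^ k = (r ^ k) ^ d) by (rewrite <- !pow_mult, Nat.mul_comm; reflexivity).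
  assert (E2 : (1 + r) ^ (d * n) = ((1 + r) ^ n) ^ d) by (rewrite <- pow_mult, Nat.mul_comm; reflexivity).
  rewrite E1, E2, <- Rpow_mult_distr, E, Rpow_mult_distr. ring.
Qed.

Theorem proposition7 (d : nat) (p : nat -> R)
  (hd : (3 <= d)%nat)
  (hp : forall j, (j < d)%nat -> 0 < p j < 1) :
  let P := Pprod d p in
  let r := root_d d P in
  exists eps delta : nat -> R,
    Un_cv eps 0 /\ Un_cv delta 0 /\
    exists N : nat, forall n : nat, (N <= n)%nat ->
      binom_pow_sum d n P <=
        ((r + 1) / sqrt (2 * PI * r) + eps n) ^ (d - 1)
        * Rpower (INR n) (- (INR d - 1) / 2) * (1 + r) ^ (d * n)
      /\
      ((r + 1) / sqrt (2 * PI * r) * exp (- ((r + 1) ^ 2 / (2 * r))) + delta n) ^ d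
        * Rpower (INR n) (- (INR d - 1) / 2) * (1 + r) ^ (d * n)
        <= binom_pow_sum d n P.
Proof.
  intros P r. pose proof PI_RGT_0.
  assert (HP : 0 < P).
  { unfold P, Pprod. apply prod_pos. intros j Hj.
    destruct (hp j ltac:(lia)). apply Rdiv_lt_0_compat; lra. }
  assert (Hr : 0 < r) by (unfold r, root_d, Rpower; apply exp_pos).
  assert (HrP : r ^ d = P).
  { rewrite <- Rpower_pow by auto. unfold r, root_d. rewrite Rpower_mult.
    replace (1 / INR d * INR d) with 1. apply Rpower_1; auto.
    assert (1 <= INR d) by (apply (le_INR 1); lia). field. lra. }
  set (pp := r / (1 + r)).
  assert (Hpp : 0 < pp < 1).
  { unfold pp. split. apply Rdiv_lt_0_compat; lra.
    apply (Rmult_lt_reg_r (1 + r)); [lra|]. unfold Rdiv. rewrite Rmult_assoc, Rinv_l; lra. }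
  set (A := sqrt (/ (2 * PI * pp * (1 - pp)))).
  assert (HA : (r + 1) / sqrt (2 * PI * r) = A).
  { unfold A, pp. replace (/ (2 * PI * (r / (1 + r)) * (1 - r / (1 + r)))) with ((r + 1) ^ 2 * / (2 * PI * r))
      by (field; split; lra).
    assert (0 < 2 * PI * r) by (apply Rmult_lt_0_compat; lra).
    assert (0 <= / (2 * PI * r)) by (apply Rlt_le, Rinv_0_lt_compat; lra).
    rewrite (sqrt_mult ((r + 1) ^ 2) (/ (2 * PI * r))); [| apply pow2_ge_0 | auto].
    rewrite sqrt_pow2 by lra. rewrite sqrt_inv. reflexivity. }
  assert (HE : exp (- ((r + 1) ^ 2 / (2 * r))) = exp (- / (2 * (pp * (1 - pp))))).
  { f_equal. unfold pp. field. split; lra. }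
  set (eps := fun n : nat => Rmax 0 (sqrt (INR n) * ab pp n (mo pp n) - A)).
  exists eps, (fun _ => 0).
  split; [|split].
  - intros e He. destruct (UB pp Hpp (e / 2) ltac:(lra)) as [N [HN1 HN]].
    exists N. intros n Hn. unfold R_dist. rewrite Rminus_0_r.
    specialize (HN n ltac:(lia)). unfold eps.
    assert (0 <= Rmax 0 (sqrt (INR n) * ab pp n (mo pp n) - A)) by apply Rmax_l.
    rewrite Rabs_right by lra.
    apply Rmax_lub_lt; [lra|]. fold A in HN. lra.
  - intros e He. exists 0%nat. intros n _. unfold R_dist. rewrite Rminus_0_r, Rabs_R0. auto.
  - destruct (LB pp d Hpp ltac:(lia)) as [N [HN1 HN]].
    exists N. intros n Hn.
    assert (Hn1 : 1 <= INR n) by (apply (le_INR 1); lia).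
    rewrite HA, HE, Rplus_0_r.
    rewrite Rpower_half by (auto; lia || lra).
    rewrite <- HrP, binom_ab by auto. fold pp.
    split.
    +
      set (M := ab pp n (mo pp n)).
      assert (HM0 : 0 <= M) by (apply ab_nonneg; auto).
      set (sv := sqrt (INR n)).
      assert (Hsv : 0 < sv) by (apply sqrt_lt_R0; lra).
      assert (HMe : M <= (A + eps n) / sv).
      { unfold eps. fold sv M. pose proof (Rmax_r 0 (sv * M - A)).
        apply (Rmult_le_reg_l sv); auto. unfold Rdiv. rewrite <- Rmult_assoc.
        rewrite (Rmult_comm sv (A + _)), Rmult_assoc, Rinv_r by lra. lra. }
      destruct d as [|d']; [lia|]. replace (S d' - 1)%nat with d' by lia.
      assert (Hs : sum_f_R0 (fun k => ab pp n k ^ S d') n <= M ^ d').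
      { apply Rle_trans with (sum_f_R0 (fun k => ab pp n k * M ^ d') n).
        - apply sum_Rle. intros k Hk. simpl.
          apply Rmult_le_compat_l. apply ab_nonneg; auto.
          apply pow_incr. split. apply ab_nonneg; auto. apply ab_le_mode; auto.
        - rewrite <- scal_sum, sum_ab_1. lra. }
      assert (HMd : M ^ d' <= (A + eps n) ^ d' * / sv ^ d').
      { rewrite <- pow_inv, <- Rpow_mult_distr. apply pow_incr. split; auto. }
      assert (0 < (1 + r) ^ (S d' * n)) by (apply pow_lt; lra).
      apply Rle_trans with ((1 + r) ^ (S d' * n) * ((A + eps n) ^ d' * / sv ^ d')).
      apply Rmult_le_compat_l; lra. right; ring.
    +
      specialize (HN n Hn). fold A in HN.
      assert (0 < (1 + r) ^ (d * n)) by (apply pow_lt; lra).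
      apply Rle_trans with ((1 + r) ^ (d * n) * ((A * exp (- / (2 * (pp * (1 - pp))))) ^ d / sqrt (INR n) ^ (d - 1))).
      right; unfold Rdiv; ring.
      apply Rmult_le_compat_l; lra.
Qed.
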